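(* Suppose $\beta_-\ne0$ and $\gamma_->0$, and let $J\subset]0,b[$ be an interval. 1. If $\beta_-<0$ and the curve $\overline\Delta(x,y)=0$ lies above (resp. below) the curve $y=\Pi(x)$ for all $x\in J$, then $\Delta(x)>0$ and $\tilde I'(x)>0$ (resp. $\Delta(x)<0$ and $\tilde I'(x)<0$) for all $x\in J$. 2. If $\beta_->0$ and the curve $\overline\Delta(x,y)=0$ lies above (resp. below) the curve $y=\Pi(x)$ for all $x\in J$, then $\Delta(x)<0$ and $\tilde I'(x)<0$ (resp. $\Delta(x)>0$ and $\tilde I'(x)>0$) for all $x\in J$.
   Context: Real parameters $B,\alpha_+,\beta_+,\gamma_+,\delta_+,\beta_-,\gamma_-$ with $B>\delta_+>0$. $Z^-(x,y)=(-1+\beta_- y,\,-x+\gamma_- y)$, $X^{sl}(u)=\frac{1}{1+\delta_+}(B-\delta_++\alpha_+u)$, and $x^*=-(B-\delta_+)/\alpha_+$ when $\alpha_+\ne0$. Poincaré half-map $\Pi$: for $x>0$, $(\Pi(x),0)$ with $\Pi(x)<0$ is the first return to $\{y=0\}$ of the forward $Z^-$-orbit through $(x,0)$; $\Pi(0)=0$. $[0,b[$ is the largest interval of this form in the domain of $\Pi$ such that $X^{sl}>0$ on $[\Pi(x),x]$ for all $x\in[0,b[$. Define $\tilde I(x)=\int_{\Pi(x)}^x\frac{u\,du}{X^{sl}(u)}$ on $[0,b[$, $\overline\Delta(x,y)=\alpha_+\beta_-xy+\beta_-(B-\delta_+)(x+y)-\alpha_+-\gamma_-(B-\delta_+)$,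 and $\Delta(x)=\overline\Delta(x,\Pi(x))$. ''The curve $\overline\Delta=0$ lies above (below) $y=\Pi(x)$ for $x\in J$'' means: for each $x\in J$, every $y$ with $\overline\Delta(x,y)=0$ satisfies $y>\Pi(x)$ (resp. $y<\Pi(x)$). *)

(* Defs.v *)
From Stdlib Require Import Reals.
From Coquelicot Require Import Coquelicot.
Open Scope R_scope.

Definition Zm_solution (bm gm : R) (p q : R -> R) : Prop :=
  forall t : R, is_derive p t (-1 + bm * q t) /\ is_derive q t (- p t + gm * q t).

(* half_map bm gm x y : the forward Z^- orbit through (x,0) first returns to
   {y = 0} at the point (y,0), and y < 0.  I.e. Pi(x) = y. *)
Definition half_map (bm gm x y : R) : Prop :=
  y < 0 /\
  exists (p q : R -> R) (T : R),
    0 < T /\ Zm_solution bm gm p q /\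
    p 0 = x /\ q 0 = 0 /\ p T = y /\ q T = 0 /\
    (forall t, 0 < t < T -> q t <> 0).

Definition Xsl (B ap dp u : R) : R := (B - dp + ap * u) / (1 + dp).

Definition Delta_bar (B ap dp bm gm x y : R) : R :=
  ap * bm * x * y + bm * (B - dp) * (x + y) - ap - gm * (B - dp).

Definition I_tilde (B ap dp : R) (Pi : R -> R) (x : R) : R :=
  RInt (fun u => u / Xsl B ap dp u) (Pi x) x.

Definition is_interval (J : R -> Prop) : Prop :=
  forall a c z, J a -> J c -> a <= z <= c -> J z.

Definition curve_above (B ap dp bm gm : R) (Pi : R -> R) (J : R -> Prop) : Prop :=
  forall x, J x -> forall y, Delta_bar B ap dp bm gm x y = 0 -> y > Pi x.
Definition curve_below (B ap dp bm gm : R) (Pi : R -> R) (J : R -> Prop) : Prop :=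
  forall x, J x -> forall y, Delta_bar B ap dp bm gm x y = 0 -> y < Pi x.

(* Main.v *)
Require Import Defs.
From Stdlib Require Import Reals Lra Psatz.
From Coquelicot Require Import Coquelicot.
Open Scope R_scope.

Lemma deq (f : R -> R) (t l l' : R) : is_derive f t l -> l = l' -> is_derive f t l'.
Proof. intros H ->; exact H. Qed.

Lemma dplus (f g : R -> R) t a b : is_derive f t a -> is_derive g t b ->
  is_derive (fun s => f s + g s) t (a + b).
Proof. intros; apply (is_derive_plus f g t a b); auto. Qed.
Lemma dminus (f g : R -> R) t a b : is_derive f t a -> is_derive g t b ->
  is_derive (fun s => f s - g s) t (a - b).
Proof. intros; apply (is_derive_minus f g t a b); auto. Qed.
Lemma dmult (f g : R -> R) t a b : is_derive f t a -> is_derive g t b ->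
  is_derive (fun s => f s * g s) t (a * g t + f t * b).
Proof. intros; apply (is_derive_mult f g t a b); auto. intros; apply Rmult_comm. Qed.
Lemma dconst (c : R) t : is_derive (fun _ => c) t 0.
Proof. apply (is_derive_const c t). Qed.
Lemma did t : is_derive (fun s => s) t 1.
Proof. apply (is_derive_id t). Qed.

Lemma der_cont (f : R -> R) (t l : R) : is_derive f t l -> continuity_pt f t.
Proof. intros H. apply continuity_pt_filterlim. apply (ex_derive_continuous f t). exists l; exact H. Qed.

Lemma der_continuity (f f' : R -> R) : (forall t, is_derive f t (f' t)) -> continuity f.
Proof. intros H t. eapply der_cont; apply H. Qed.

Lemma mvt (f f' : R -> R) (a b : R) : (forall t, is_derive f t (f' t)) -> a <= b ->
  exists c, a <= c <= b /\ f b - f a = f' c * (b - a).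
Proof.
  intros H Hab. destruct (MVT_gen f a b f') as [c [Hc E]].
  - intros; apply H.
  - intros; eapply der_cont; apply H.
  - exists c; split; [|exact E]. rewrite Rmin_left in Hc by lra. rewrite Rmax_right in Hc by lra. exact Hc.
Qed.

Lemma const_of_der0 (g : R -> R) : (forall t, is_derive g t 0) -> forall t, g t = g 0.
Proof.
  intros H t. destruct (Rle_or_lt 0 t).
  - destruct (mvt g (fun _ => 0) 0 t H) as [c [_ E]]; auto. lra.
  - destruct (mvt g (fun _ => 0) t 0 H) as [c [_ E]]; lra.
Qed.

Lemma exp_sol (f : R -> R) (k : R) : (forall t, is_derive f t (k * f t)) -> forall t, f t = f 0 * exp (k * t).
Proof.
  intros H t.
  assert (Hg: forall s, is_derive (fun s => f s * exp (- (k * s))) s 0).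
  { intros s. eapply deq. apply dmult. apply H. auto_derive. auto. reflexivity. simpl. ring. }
  pose proof (const_of_der0 _ Hg t) as E. simpl in E.
  replace (- (k*0)) with 0 in E by ring. rewrite exp_0 in E.
  assert (P := exp_pos (k*t)).
  replace (f t) with (f t * exp (- (k * t)) * exp (k*t)).
  rewrite E; ring.
  rewrite Rmult_assoc, <- exp_plus. replace (- (k * t) + k * t) with 0 by ring. rewrite exp_0; ring.
Qed.

Definition homs (bm gm : R) (u1 u2 : R -> R) : Prop :=
  forall t, is_derive u1 t (bm * u2 t) /\ is_derive u2 t (- u1 t + gm * u2 t).

Lemma hom_uniq bm gm d1 d2 : homs bm gm d1 d2 -> d1 0 = 0 -> d2 0 = 0 ->
  forall t, 0 <= t -> d1 t = 0 /\ d2 t = 0.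
Proof.
  intros H H1 H2 t Ht.
  set (L := Rabs (bm - 1) + 2 * Rabs gm).
  set (F := fun s => (d1 s * d1 s + d2 s * d2 s) * exp (- (L * s))).
  set (F' := fun s => (2 * (bm - 1) * d1 s * d2 s + 2 * gm * d2 s * d2 s
                       - L * (d1 s * d1 s + d2 s * d2 s)) * exp (- (L * s))).
  assert (HF : forall s, is_derive F s (F' s)).
  { intros s. destruct (H s) as [A B]. unfold F, F'.
    eapply deq. apply dmult. apply dplus; apply dmult; eauto.
    auto_derive; auto. simpl. ring. }
  destruct (mvt F F' 0 t HF Ht) as [c [Hc E]].
  assert (F'c : F' c <= 0).
  { unfold F'. apply Rmult_le_0_r; [|left; apply exp_pos].
    assert (A1 : 2 * (bm - 1) * d1 c * d2 c <= Rabs (bm - 1) * (d1 c * d1 c + d2 c * d2 c)).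
    { destruct (Rle_or_lt 0 (bm - 1)).
      - rewrite Rabs_pos_eq by lra.
        assert (0 <= (bm - 1) * ((d1 c - d2 c) * (d1 c - d2 c))) by (apply Rmult_le_pos; [lra | apply Rle_0_sqr]).
        nra.
      - rewrite Rabs_left by lra.
        assert (0 <= (1 - bm) * ((d1 c + d2 c) * (d1 c + d2 c))) by (apply Rmult_le_pos; [lra | apply Rle_0_sqr]).
        nra. }
    assert (A2 : gm * d2 c * d2 c <= Rabs gm * (d1 c * d1 c + d2 c * d2 c)).
    { assert (gm <= Rabs gm) by apply Rle_abs. assert (0 <= Rabs gm) by apply Rabs_pos. nra. }
    unfold L. nra. }
  assert (F0 : F 0 = 0). { unfold F. rewrite H1, H2. ring. }
  assert (Ft : F t <= 0) by nra.
  unfold F in Ft. assert (Pe := exp_pos (- (L * t))).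
  assert (d1 t * d1 t + d2 t * d2 t <= 0).
  { apply Rmult_le_reg_r with (exp (- (L * t))); auto. lra. }
  split; nra.
Qed.

Lemma zm_shift bm gm p q p' q' u1 u2 h :
  Zm_solution bm gm p q -> Zm_solution bm gm p' q' -> homs bm gm u1 u2 ->
  u1 0 = 1 -> u2 0 = 0 -> p' 0 = p 0 + h -> q' 0 = q 0 ->
  forall t, 0 <= t -> p' t = p t + h * u1 t /\ q' t = q t + h * u2 t.
Proof.
  intros Z Z' U U1 U2 P0 Q0 t Ht.
  destruct (hom_uniq bm gm (fun s => p' s - p s - h * u1 s) (fun s => q' s - q s - h * u2 s))
    with (t := t) as [A B]; auto.
  - intros s. destruct (Z s), (Z' s), (U s). split.
    + eapply deq. apply dminus. apply dminus; eauto. apply is_derive_scal; eauto. ring.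
    + eapply deq. apply dminus. apply dminus; eauto. apply is_derive_scal; eauto. ring.
  - simpl. rewrite P0, U1; ring.
  - simpl. rewrite Q0, U2; ring.
  - simpl in A, B. split; lra.
Qed.

Lemma zm_diff_hom bm gm p q p' q' k :
  Zm_solution bm gm p q -> Zm_solution bm gm p' q' ->
  homs bm gm (fun t => (p' t - p t) / k) (fun t => (q' t - q t) / k).
Proof.
  intros Z Z' s. destruct (Z s), (Z' s). unfold Rdiv. split.
  - eapply deq. apply dmult. apply dminus; eauto. apply dconst. cbv beta. ring.
  - eapply deq. apply dmult. apply dminus; eauto. apply dconst. cbv beta. ring.
Qed.

Lemma cont_near_lt (f : R -> R) a c : continuity_pt f a -> f a < c ->
  exists d, 0 < d /\ forall t, Rabs (t - a) < d -> f t < c.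
Proof.
  intros H Hc. destruct (H (c - f a)) as [d [Hd Hd']]; [lra|].
  exists d; split; auto. intros t Ht.
  destruct (Req_dec t a) as [->|Hne]; auto.
  assert (dist R_met (f t) (f a) < c - f a).
  { apply Hd'. split. split; [exact I | auto]. simpl. unfold R_dist. exact Ht. }
  simpl in H0. unfold R_dist in H0.
  assert (f t - f a <= Rabs (f t - f a)) by apply Rle_abs. lra.
Qed.

Lemma cont_near_gt (f : R -> R) a c : continuity_pt f a -> c < f a ->
  exists d, 0 < d /\ forall t, Rabs (t - a) < d -> c < f t.
Proof.
  intros H Hc. destruct (cont_near_lt (fun t => - f t) a (- c)) as [d [Hd Hd']].
  - apply continuity_pt_opp; auto.
  - lra.
  - exists d; split; auto. intros t Ht. specialize (Hd' t Ht). simpl in Hd'. lra.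
Qed.

Lemma lt_div a A B : 0 < B -> a < A / B -> a * B < A.
Proof. intros HB H. apply Rmult_lt_compat_r with (r := B) in H; auto.
  replace (A / B * B) with A in H by (field; lra). exact H. Qed.

Lemma abs_bound_combo h a b g M : Rabs a <= M -> Rabs b <= M ->
  Rabs (h * (- a + g * b)) <= Rabs h * ((1 + Rabs g) * M).
Proof.
  intros Ha Hb. rewrite Rabs_mult. apply Rmult_le_compat_l; [apply Rabs_pos|].
  eapply Rle_trans. apply Rabs_triang. rewrite Rabs_Ropp, Rabs_mult.
  assert (0 <= Rabs g) by apply Rabs_pos.
  assert (Rabs g * Rabs b <= Rabs g * M) by (apply Rmult_le_compat_l; auto). lra.
Qed.

Lemma return_cont bm gm p q u1 u2 x T :
  Zm_solution bm gm p q -> homs bm gm u1 u2 -> u2 0 = 0 ->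
  p 0 = x -> 0 < x -> q 0 = 0 -> 0 < T -> q T = 0 -> p T < 0 ->
  (forall t, 0 < t < T -> q t <> 0) ->
  forall eta, 0 < eta -> exists delta, 0 < delta /\
    forall h T', Rabs h < delta -> 0 < T' -> q T' + h * u2 T' = 0 ->
      (forall t, 0 < t < T' -> q t + h * u2 t <> 0) -> Rabs (T' - T) < eta.
Proof.
  intros Z U U20 P0 Hx Q0 HT QT PT Hq eta Heta.
  set (qd := fun t => - p t + gm * q t).
  assert (Hqd : forall t, is_derive q t (qd t)) by (intros t; apply (Z t)).
  assert (Hpd : forall t, is_derive p t (-1 + bm * q t)) by (intros t; apply (Z t)).
  assert (Cp := der_continuity _ _ Hpd). assert (Cq := der_continuity _ _ Hqd).
  assert (Cqd : continuity qd).
  { unfold qd. intros t. apply continuity_pt_plus. apply continuity_pt_opp; auto.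
    apply continuity_pt_mult; auto. apply continuity_pt_const. intros a b; auto. }
  assert (Hu1 : forall t, is_derive u1 t (bm * u2 t)) by (intros t; apply (U t)).
  assert (Hu2 : forall t, is_derive u2 t (- u1 t + gm * u2 t)) by (intros t; apply (U t)).
  assert (Cu1 := der_continuity _ _ Hu1). assert (Cu2 := der_continuity _ _ Hu2).
  destruct (cont_near_lt qd 0 (- x / 2)) as [d0 [Hd0 Hd0']]; auto.
  { unfold qd. rewrite P0, Q0. lra. }
  set (a0 := Rmin (d0 / 2) (T / 4)).
  assert (Ha0 : 0 < a0 /\ a0 <= T / 4 /\ a0 < d0).
  { unfold a0. split; [apply Rmin_pos; lra|]. split; [apply Rmin_r|].
    eapply Rle_lt_trans. apply Rmin_l. lra. }
  destruct (cont_near_gt qd T 0) as [d1 [Hd1 Hd1']]; auto.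
  { unfold qd. rewrite QT. lra. }
  set (a1 := Rmin (d1 / 2) (Rmin (eta / 2) (Rmin (T / 4) (1 / 2)))).
  assert (Ha1 : 0 < a1 /\ a1 < d1 /\ a1 < eta /\ a1 <= T / 4 /\ a1 < 1).
  { unfold a1. split. repeat apply Rmin_pos; lra.
    assert (A := Rmin_l (d1/2) (Rmin (eta / 2) (Rmin (T / 4) (1 / 2)))).
    assert (B := Rmin_r (d1/2) (Rmin (eta / 2) (Rmin (T / 4) (1 / 2)))).
    assert (C := Rmin_l (eta / 2) (Rmin (T / 4) (1 / 2))).
    assert (D := Rmin_r (eta / 2) (Rmin (T / 4) (1 / 2))).
    assert (E := Rmin_l (T / 4) (1 / 2)). assert (F := Rmin_r (T / 4) (1 / 2)).
    lra. }
  assert (Qneg0 : forall t, 0 < t <= a0 -> q t < 0).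
  { intros t Ht. destruct (mvt q qd 0 t Hqd) as [c [Hc E]]; [lra|].
    assert (qd c < - x / 2). { apply Hd0'. rewrite Rminus_0_r, Rabs_pos_eq; lra. }
    rewrite Q0 in E. nra. }
  assert (Qneg : forall t, 0 < t < T -> q t < 0).
  { intros t Ht. destruct (Rle_or_lt t a0). apply Qneg0; lra.
    destruct (Rlt_or_le (q t) 0) as [|Hge]; auto. exfalso.
    destruct Hge as [Hgt|Heq]; [|apply (Hq t); auto].
    destruct (IVT q a0 t Cq) as [z [Hz Ez]]; auto. apply Qneg0; lra.
    apply (Hq z); [lra|auto]. }
  destruct (continuity_ab_maj q a0 (T - a1)) as [tm [Htm' Htm]]; [lra| intros; apply Cq|].
  assert (Qtm : q tm < 0) by (apply Qneg; lra).
  destruct (continuity_ab_maj (fun t => Rabs (u1 t) + Rabs (u2 t)) 0 (T + 1)) as [tM [HtM _]]; [lra| |].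
  { intros c _. apply continuity_pt_plus; apply (continuity_pt_comp _ Rabs); auto; apply Rcontinuity_abs. }
  set (M := Rabs (u1 tM) + Rabs (u2 tM) + 1).
  assert (HM : 0 < M) by (unfold M; assert (0 <= Rabs (u1 tM)) by apply Rabs_pos; assert (0 <= Rabs (u2 tM)) by apply Rabs_pos; lra).
  assert (Bu : forall t, 0 <= t <= T + 1 -> Rabs (u1 t) <= M /\ Rabs (u2 t) <= M).
  { intros t Ht. specialize (HtM t Ht). simpl in HtM.
    assert (0 <= Rabs (u1 t)) by apply Rabs_pos; assert (0 <= Rabs (u2 t)) by apply Rabs_pos.
    unfold M. lra. }
  assert (Hr : 0 < q (T + a1)).
  { destruct (mvt q qd T (T + a1) Hqd) as [c [Hc E]]; [lra|].
    assert (0 < qd c). { apply Hd1'. rewrite Rabs_pos_eq; lra. }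
    rewrite QT in E. nra. }
  set (K1 := (1 + Rabs gm) * M).
  assert (HK1 : 0 < K1). { unfold K1. assert (0 <= Rabs gm) by apply Rabs_pos. nra. }
  exists (Rmin (x / 2 / K1) (Rmin (- q tm / M) (q (T + a1) / M))).
  split.
  { repeat apply Rmin_pos; apply Rdiv_lt_0_compat; lra. }
  intros h T' Hh HT' QT' Hne.
  assert (Hh1 : Rabs h * K1 < x / 2).
  { apply lt_div; auto. eapply Rlt_le_trans; [exact Hh| apply Rmin_l]. }
  assert (Hh2 : Rabs h * M < - q tm).
  { apply lt_div; auto. eapply Rlt_le_trans; [exact Hh|]. eapply Rle_trans; [apply Rmin_r| apply Rmin_l]. }
  assert (Hh3 : Rabs h * M < q (T + a1)).
  { apply lt_div; auto. eapply Rlt_le_trans; [exact Hh|]. eapply Rle_trans; [apply Rmin_r| apply Rmin_r]. }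
  set (Q := fun t => q t + h * u2 t).
  set (Q' := fun t => qd t + h * (- u1 t + gm * u2 t)).
  assert (HQ : forall t, is_derive Q t (Q' t)).
  { intros t. unfold Q, Q'. apply dplus; auto. apply is_derive_scal; auto. }
  assert (CQ := der_continuity _ _ HQ).
  assert (Hbh : forall t, 0 <= t <= T + 1 -> Rabs (h * u2 t) < - q tm /\ Rabs (h * u2 t) < q (T + a1)).
  { intros t Ht. destruct (Bu t Ht) as [_ B2]. rewrite Rabs_mult.
    assert (Rabs h * Rabs (u2 t) <= Rabs h * M) by (apply Rmult_le_compat_l; auto; apply Rabs_pos).
    lra. }
  assert (QnegA : forall t, 0 < t <= T - a1 -> Q t < 0).
  { intros t Ht. destruct (Rle_or_lt t a0).
    - destruct (mvt Q Q' 0 t HQ) as [c [Hc E]]; [lra|].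
      assert (qd c < - x / 2). { apply Hd0'. rewrite Rminus_0_r, Rabs_pos_eq; lra. }
      destruct (Bu c) as [B1 B2]; [lra|].
      assert (Ab := abs_bound_combo h (u1 c) (u2 c) gm M B1 B2).
      assert (h * (- u1 c + gm * u2 c) <= Rabs (h * (- u1 c + gm * u2 c))) by apply Rle_abs.
      fold K1 in Ab.
      assert (Q' c < 0) by (unfold Q'; lra).
      unfold Q in E |- *. rewrite Q0, U20 in E. nra.
    - specialize (Htm' t ltac:(lra)). destruct (Hbh t) as [B _]; [lra|].
      assert (h * u2 t <= Rabs (h * u2 t)) by apply Rle_abs. unfold Q. lra. }
  assert (QTa : 0 < Q (T + a1)).
  { destruct (Hbh (T + a1)) as [_ B]; [lra|].
    assert (- (h * u2 (T + a1)) <= Rabs (h * u2 (T + a1))) by (rewrite <- Rabs_Ropp; apply Rle_abs).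
    unfold Q. lra. }
  destruct (IVT Q (T - a1) (T + a1) CQ) as [z [Hz Ez]]; [lra| apply QnegA; lra | auto |].
  assert (T - a1 < T').
  { destruct (Rlt_or_le (T - a1) T') as [|Hle]; auto. exfalso.
    assert (Q T' < 0) by (apply QnegA; lra). unfold Q in H. lra. }
  assert (T' <= z).
  { destruct (Rle_or_lt T' z) as [|Hlt]; auto. exfalso.
    apply (Hne z); [lra | exact Ez]. }
  apply Rabs_def1; lra.
Qed.

Definition dq (f : R -> R) (T l : R) (s : R) : R :=
  if Req_EM_T s T then l else (f s - f T) / (s - T).

Lemma dq_cont (f : R -> R) T l : is_derive f T l -> continuity_pt (dq f T l) T.
Proof.
  intros H. apply is_derive_Reals in H.
  intros eps Heps. destruct (H eps Heps) as [d Hd].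
  exists d. split; [apply cond_pos|].
  intros s [[_ Hs] Hds]. simpl in *. unfold R_dist in *. unfold dq.
  destruct (Req_EM_T T T) as [_|]; [|congruence].
  destruct (Req_EM_T s T) as [->|Hne]; [congruence|].
  specialize (Hd (s - T)). replace (T + (s - T)) with s in Hd by ring.
  apply Hd; auto. lra.
Qed.

Lemma dq_at (f : R -> R) T l : dq f T l T = l.
Proof. unfold dq. destruct (Req_EM_T T T); congruence. Qed.

Lemma dq_ne (f : R -> R) T l s : s <> T -> dq f T l s = (f s - f T) / (s - T).
Proof. intros H. unfold dq. destruct (Req_EM_T s T); congruence. Qed.

Lemma cont_near_abs (f : R -> R) a eps : continuity_pt f a -> 0 < eps ->
  exists d, 0 < d /\ forall t, Rabs (t - a) < d -> Rabs (f t - f a) < eps.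
Proof.
  intros H He.
  destruct (cont_near_lt f a (f a + eps)) as [d1 [H1 H1']]; auto; [lra|].
  destruct (cont_near_gt f a (f a - eps)) as [d2 [H2 H2']]; auto; [lra|].
  exists (Rmin d1 d2). split; [apply Rmin_pos; auto|].
  intros t Ht. assert (Ha1 : Rabs (t - a) < d1) by (eapply Rlt_le_trans; [exact Ht| apply Rmin_l]).
  assert (Ha2 : Rabs (t - a) < d2) by (eapply Rlt_le_trans; [exact Ht| apply Rmin_r]).
  specialize (H1' t Ha1). specialize (H2' t Ha2). apply Rabs_def1; lra.
Qed.

Lemma Pi_deriv bm gm b (Pi : R -> R) x p q u1 u2 T :
  (forall x', 0 < x' < b -> half_map bm gm x' (Pi x')) ->
  0 < x < b ->
  Zm_solution bm gm p q -> p 0 = x -> q 0 = 0 -> 0 < T -> p T = Pi x -> q T = 0 ->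
  Pi x < 0 -> (forall t, 0 < t < T -> q t <> 0) ->
  homs bm gm u1 u2 -> u1 0 = 1 -> u2 0 = 0 ->
  is_derive Pi x (u1 T - u2 T / Pi x).
Proof.
  intros HPi Hx Z P0 Q0 HT PT QT Hy Hq U U10 U20.
  set (y := Pi x) in *.
  set (qd := fun t => - p t + gm * q t).
  set (pd := fun t => -1 + bm * q t).
  assert (Hqd : forall t, is_derive q t (qd t)) by (intros t; apply (Z t)).
  assert (Hpd : forall t, is_derive p t (pd t)) by (intros t; apply (Z t)).
  assert (Hu1 : forall t, is_derive u1 t (bm * u2 t)) by (intros t; apply (U t)).
  assert (Hu2 : forall t, is_derive u2 t (- u1 t + gm * u2 t)) by (intros t; apply (U t)).
  assert (Cu1 := der_continuity _ _ Hu1). assert (Cu2 := der_continuity _ _ Hu2).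
  set (Dq := dq q T (qd T)). set (Dp := dq p T (pd T)).
  assert (CDq : continuity_pt Dq T) by (apply dq_cont; auto).
  assert (CDp : continuity_pt Dp T) by (apply dq_cont; auto).
  assert (DqT : Dq T = - y). { unfold Dq. rewrite dq_at. unfold qd. rewrite QT, PT. fold y. ring. }
  assert (DpT : Dp T = - 1). { unfold Dp. rewrite dq_at. unfold pd. rewrite QT. ring. }
  set (G := fun s => u1 s - Dp s * u2 s / Dq s).
  assert (CG : continuity_pt G T).
  { unfold G. apply continuity_pt_minus; auto. apply continuity_pt_div.
    apply continuity_pt_mult; auto. auto. rewrite DqT. lra. }
  assert (GT : G T = u1 T - u2 T / y). { unfold G. rewrite DqT, DpT. field. lra. }
  apply is_derive_Reals. intros eps Heps.
  destruct (cont_near_abs G T eps CG Heps) as [e1 [He1 He1']].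
  destruct (cont_near_gt Dq T 0 CDq) as [e2 [He2 He2']]; [rewrite DqT; lra|].
  destruct (return_cont bm gm p q u1 u2 x T Z U U20 P0 (proj1 Hx) Q0 HT QT ltac:(rewrite PT; exact Hy) Hq
              (Rmin e1 e2) ltac:(apply Rmin_pos; auto)) as [d [Hd Hd']].
  assert (Hpos : 0 < Rmin d (Rmin x (b - x))) by (repeat apply Rmin_pos; lra).
  exists (mkposreal _ Hpos). intros h Hh0 Hh. simpl in Hh.
  assert (Hhd : Rabs h < d) by (eapply Rlt_le_trans; [exact Hh| apply Rmin_l]).
  assert (Hhx : Rabs h < x) by (eapply Rlt_le_trans; [exact Hh|]; eapply Rle_trans; [apply Rmin_r|apply Rmin_l]).
  assert (Hhb : Rabs h < b - x) by (eapply Rlt_le_trans; [exact Hh|]; eapply Rle_trans; [apply Rmin_r|apply Rmin_r]).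
  assert (Hxh : 0 < x + h < b).
  { assert (- h <= Rabs h) by (rewrite <- Rabs_Ropp; apply Rle_abs). assert (h <= Rabs h) by apply Rle_abs. lra. }
  destruct (HPi (x + h) Hxh) as [Hy' [p' [q' [T' [HT' [Z' [P0' [Q0' [PT' [QT' Hne']]]]]]]]]].
  assert (Sh := zm_shift bm gm p q p' q' u1 u2 h Z Z' U U10 U20 ltac:(rewrite P0', P0; ring) ltac:(rewrite Q0', Q0; ring)).
  assert (HT'T : Rabs (T' - T) < Rmin e1 e2).
  { apply (Hd' h T'); auto.
    - destruct (Sh T') as [_ E]; [lra|]. rewrite <- E. exact QT'.
    - intros t Ht. destruct (Sh t) as [_ E]; [lra|]. rewrite <- E. apply Hne'; auto. }
  assert (Hte1 : Rabs (T' - T) < e1) by (eapply Rlt_le_trans; [exact HT'T| apply Rmin_l]).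
  assert (Hte2 : Rabs (T' - T) < e2) by (eapply Rlt_le_trans; [exact HT'T| apply Rmin_r]).
  destruct (Sh T') as [EP EQ]; [lra|].
  assert (Hq' : q T' + h * u2 T' = 0) by (rewrite <- EQ; exact QT').
  assert (E : (Pi (x + h) - y) / h = G T').
  { rewrite <- PT'. rewrite EP. unfold G.
    destruct (Req_dec T' T) as [->|Hne].
    - assert (u2 T = 0). { rewrite QT, Rplus_0_l in Hq'. apply Rmult_integral in Hq'. destruct Hq'; [lra|auto]. }
      rewrite H. rewrite PT. field. split; auto. rewrite DqT; lra.
    - specialize (He2' T' Hte2).
      unfold Dq, Dp in *. rewrite dq_ne in * by auto. rewrite QT, PT in *.
      assert (T' - T <> 0) by lra.
      assert (u2 T' <> 0).
      { intros H0. rewrite H0 in Hq'. rewrite Rmult_0_r, Rplus_0_r in Hq'. rewrite Hq' in He2'.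
        unfold Rdiv in He2'. rewrite Rminus_0_l, Ropp_0, Rmult_0_l in He2'. lra. }
      replace (q T') with (- (h * u2 T')) by lra. rewrite (dq_ne q T (qd T) T' Hne), QT. replace (q T') with (- (h * u2 T')) by lra. field. repeat split; auto. }
  change (Rabs ((Pi (x + h) - y) / h - (u1 T - u2 T / y)) < eps). rewrite E, <- GT. apply He1'. exact Hte1.
Qed.

Lemma dopp (f : R -> R) t a : is_derive f t a -> is_derive (fun s => - f s) t (- a).
Proof. intros H. apply (is_derive_opp f t a H). Qed.

Lemma sign_core bm gm p q u1 u2 x T :
  Zm_solution bm gm p q -> p 0 = x -> 0 < x -> q 0 = 0 -> 0 < T -> q T = 0 -> p T < 0 ->
  homs bm gm u1 u2 -> u1 0 = 1 -> u2 0 = 0 -> 0 < gm -> bm <> 0 ->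
  0 < bm * x * x - gm * x + 1 /\
  (p T * u1 T - u2 T) * (bm * x * x - gm * x + 1) = x * (bm * p T * p T - gm * p T + 1).
Proof.
  intros Z P0 Hx Q0 HT QT Hy U U10 U20 Hgm Hbm.
  set (y := p T) in *.
  set (W := fun t => (-1 + bm * q t) * u2 t - (- p t + gm * q t) * u1 t).
  set (K := fun t => (bm * p t - gm) * (- p t + gm * q t) - (bm * q t - 1) * (bm * q t - 1)).
  assert (HW : forall t, is_derive W t (gm * W t)).
  { intros t. destruct (Z t) as [Zp Zq]. destruct (U t) as [U1 U2]. unfold W.
    eapply deq.
    apply dminus; apply dmult.
    - apply dplus. apply dconst. apply is_derive_scal; exact Zq.
    - exact U2.
    - apply dplus. apply dopp; exact Zp. apply is_derive_scal; exact Zq.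
    - exact U1.
    - cbv beta; ring. }
  assert (HK : forall t, is_derive K t (gm * K t)).
  { intros t. destruct (Z t) as [Zp Zq]. unfold K.
    eapply deq.
    apply dminus; apply dmult.
    - apply dminus. apply is_derive_scal; exact Zp. apply dconst.
    - apply dplus. apply dopp; exact Zp. apply is_derive_scal; exact Zq.
    - apply dminus. apply is_derive_scal; exact Zq. apply dconst.
    - apply dminus. apply is_derive_scal; exact Zq. apply dconst.
    - cbv beta; ring. }
  assert (EW := exp_sol W gm HW). assert (EK := exp_sol K gm HK).
  assert (W0 : W 0 = x). { unfold W. rewrite P0, Q0, U10, U20. ring. }
  assert (K0 : K 0 = - (bm * x * x - gm * x + 1)). { unfold K. rewrite P0, Q0. ring. }
  assert (WT : W T = y * u1 T - u2 T). { unfold W. rewrite QT. fold y. ring. }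
  assert (KT : K T = - (bm * y * y - gm * y + 1)). { unfold K. rewrite QT. fold y. ring. }
  set (e := exp (gm * T)). assert (He : 0 < e) by apply exp_pos.
  assert (WTe : W T = x * e) by (rewrite EW, W0; auto).
  assert (KTe : K T = K 0 * e) by (rewrite EK; auto).
  split.
  - destruct (Rlt_or_le 0 (bm * x * x - gm * x + 1)) as [|Hle]; auto. exfalso.
    destruct (Rlt_or_le 0 bm) as [Hb|Hb].
    + assert (Ny : bm * y * y - gm * y + 1 <= 0).
      { assert (K T >= 0). { rewrite KTe, K0. apply Rle_ge. apply Rmult_le_pos; lra. } lra. }
      assert (Hid : x * (bm * y * y - gm * y + 1) - y * (bm * x * x - gm * x + 1) = (x - y) * (1 - bm * x * y)) by ring.
      assert (0 < (x - y) * (1 - bm * x * y)).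
      { apply Rmult_lt_0_compat. lra. assert (0 < bm * (x * (- y))) by (apply Rmult_lt_0_compat; nra). nra. }
      assert (x * (bm * y * y - gm * y + 1) <= 0) by nra.
      assert (- y * (bm * x * x - gm * x + 1) <= 0) by nra.
      lra.
    + assert (Hb' : bm < 0) by lra.
      assert (Kpos : forall t, 0 <= K t).
      { intros t. rewrite EK, K0. apply Rmult_le_pos. lra. left; apply exp_pos. }
      set (S := fun t => 2 * bm * (- p t + gm * q t) - gm * (bm * q t - 1)).
      assert (Hid : forall t, - 4 * bm * K t = S t * S t - (gm * gm - 4 * bm) * ((bm * q t - 1) * (bm * q t - 1))).
      { intros t. unfold S, K. ring. }
      assert (S0 : 0 < S 0). { unfold S. rewrite P0, Q0. nra. }
      assert (ST : S T < 0).
      { assert (STe : S T = gm - 2 * bm * y) by (unfold S; rewrite QT; fold y; ring).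
        specialize (Hid T). rewrite QT in Hid.
        assert (0 <= - 4 * bm * K T) by (specialize (Kpos T); nra).
        assert (0 < bm * y) by nra.
        destruct (Rlt_or_le (S T) (- gm)) as [|Hge]; [lra|].
        exfalso. assert (S T < gm) by lra. nra. }
      assert (CS : continuity (fun t => - S t)).
      { apply der_continuity with (f' := fun t => - (2 * bm * (- (-1 + bm * q t) + gm * (- p t + gm * q t)) - gm * (bm * (- p t + gm * q t)))).
        intros t. destruct (Z t) as [Zp Zq]. unfold S.
        eapply deq. apply dopp. apply dminus. apply is_derive_scal.
        apply dplus. apply dopp; exact Zp. apply is_derive_scal; exact Zq.
        apply is_derive_scal. apply dminus. apply is_derive_scal; exact Zq. apply dconst.
        cbv beta; ring. }
      destruct (IVT (fun t => - S t) 0 T CS) as [tau [Htau Etau]]; [lra| simpl; lra | simpl; lra |].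
      simpl in Etau. assert (Stau : S tau = 0) by lra.
      specialize (Hid tau). rewrite Stau in Hid. specialize (Kpos tau).
      assert (HR : (bm * q tau - 1) * (bm * q tau - 1) <= 0).
      { assert (0 < gm * gm - 4 * bm) by nra. nra. }
      assert (R0 : bm * q tau - 1 = 0) by nra.
      assert (Q0' : - p tau + gm * q tau = 0).
      { unfold S in Stau. rewrite R0 in Stau. assert (E2 : (2 * bm) * (- p tau + gm * q tau) = 0) by lra.
        apply Rmult_integral in E2. destruct E2; [lra|auto]. }
      assert (W tau = 0). { unfold W. replace (-1 + bm * q tau) with 0 by lra. rewrite Q0'. ring. }
      rewrite EW, W0 in H. assert (0 < exp (gm * tau)) by apply exp_pos. nra.
  - rewrite <- WT, WTe.
    assert (Hr : x * (bm * y * y - gm * y + 1) = - x * K T) by (rewrite KT; ring).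
    rewrite Hr, KTe, K0. ring.
Qed.

Lemma ballR (a e z : R) : ball a e z -> a - e < z < a + e.
Proof.
  intros H. unfold ball in H; simpl in H. unfold AbsRing_ball, abs, minus, plus, opp in H; simpl in H.
  apply Rabs_def2 in H. lra.
Qed.

Lemma I_deriv B ap dp (Pi : R -> R) x dPi :
  0 < 1 + dp -> 0 < Xsl B ap dp x -> 0 < Xsl B ap dp (Pi x) -> Pi x < x ->
  is_derive Pi x dPi ->
  is_derive (I_tilde B ap dp Pi) x (x / Xsl B ap dp x - dPi * (Pi x / Xsl B ap dp (Pi x))).
Proof.
  intros Hd Hx Hy Hyx HPi.
  set (f := fun u => u / Xsl B ap dp u).
  set (c := B - dp).
  assert (Hpos : forall u, 0 < c + ap * u -> 0 < Xsl B ap dp u).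
  { intros u Hu. unfold Xsl. apply Rdiv_lt_0_compat; unfold c in Hu; lra. }
  assert (Hpos' : forall u, 0 < Xsl B ap dp u -> 0 < c + ap * u).
  { intros u Hu. unfold Xsl in Hu. unfold c.
    apply Rmult_lt_compat_r with (r := 1 + dp) in Hu; auto.
    replace ((B - dp + ap * u) / (1 + dp) * (1 + dp)) with (B - dp + ap * u) in Hu by (field; lra). lra. }
  assert (Cf : forall u, 0 < c + ap * u -> continuous f u).
  { intros u Hu. apply (ex_derive_continuous (K := R_AbsRing) (V := R_NormedModule) f u). unfold f, Xsl. auto_derive.
    unfold c in Hu. intros E. assert (0 < (B - dp + ap * u) * / (1 + dp)) by (apply Rmult_lt_0_compat; [lra| apply Rinv_0_lt_compat; lra]). lra. }
  set (A := c + ap * Pi x). set (Bx := c + ap * x).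
  assert (HA : 0 < A) by (apply Hpos'; auto). assert (HB : 0 < Bx) by (apply Hpos'; auto).
  set (m := Rmin A Bx). assert (Hm : 0 < m) by (apply Rmin_pos; auto).
  set (rho := m / (Rabs ap + 1)).
  assert (Hab : 0 <= Rabs ap) by apply Rabs_pos.
  assert (Hrho : 0 < rho) by (apply Rdiv_lt_0_compat; lra).
  assert (Hrm : Rabs ap * rho < m).
  { unfold rho. apply Rmult_lt_reg_r with (Rabs ap + 1); [lra|].
    replace (Rabs ap * (m / (Rabs ap + 1)) * (Rabs ap + 1)) with (Rabs ap * m) by (field; lra). nra. }
  assert (Hmin : m <= A /\ m <= Bx) by (split; [apply Rmin_l|apply Rmin_r]).
  assert (Hz : forall z, Pi x - rho < z < x + rho -> 0 < c + ap * z).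
  { intros z Hz. destruct (Rle_or_lt 0 ap).
    - rewrite Rabs_pos_eq in Hrm by lra.
      assert (0 <= ap * (z - (Pi x - rho))) by (apply Rmult_le_pos; lra).
      unfold A in Hmin. nra.
    - rewrite Rabs_left in Hrm by lra.
      assert (0 <= (- ap) * ((x + rho) - z)) by (apply Rmult_le_pos; lra).
      unfold Bx in Hmin. nra. }
  unfold I_tilde. fold f.
  eapply deq.
  apply (is_derive_RInt_bound_comp f (fun a b => RInt f a b) Pi (fun x => x) dPi 1 x).
  - exists (mkposreal rho Hrho). intros [u v] [Hu Hv]. simpl in Hu, Hv.
    apply ballR in Hu. apply ballR in Hv. simpl.
    apply (RInt_correct (V := R_CompleteNormedModule) f u v). apply (ex_RInt_continuous (V := R_CompleteNormedModule)). intros z Hzz. apply Cf. apply Hz.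
    assert (Rmin u v > Pi x - rho) by (apply Rmin_Rgt_r; lra).
    assert (Rmax u v < x + rho) by (apply Rmax_lub_lt; lra). lra.
  - apply Cf. fold A. lra.
  - apply Cf. fold Bx. lra.
  - exact HPi.
  - apply did.
  - unfold minus, plus, opp, scal; simpl. unfold mult; simpl. unfold f. ring.
Qed.

Lemma core (B ap dp bm gm b : R) (Pi : R -> R) x :
  B > dp -> dp > 0 ->
  (forall x, 0 < x < b -> half_map bm gm x (Pi x)) ->
  (forall x, 0 <= x < b -> forall u, Pi x <= u <= x -> 0 < Xsl B ap dp u) ->
  bm <> 0 -> gm > 0 -> 0 < x < b ->
  exists d, is_derive (I_tilde B ap dp Pi) x d /\
    exists k, 0 < k /\ d = k * Delta_bar B ap dp bm gm x (Pi x).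
Proof.
  intros HB Hdp HPi HX Hbm Hgm Hx.
  destruct (HPi x Hx) as [Hy [p [q [T [HT [Z [P0 [Q0 [PT [QT Hq]]]]]]]]]].
  destruct (HPi (x / 2) ltac:(lra)) as [_ [p1 [q1 [T1 [_ [Z1 [P10 [Q10 _]]]]]]]].
  set (u1 := fun t => (p1 t - p t) / (x / 2 - x)).
  set (u2 := fun t => (q1 t - q t) / (x / 2 - x)).
  assert (U : homs bm gm u1 u2) by (apply zm_diff_hom; auto).
  assert (U10 : u1 0 = 1) by (unfold u1; rewrite P10, P0; field; lra).
  assert (U20 : u2 0 = 0) by (unfold u2; rewrite Q10, Q0; field; lra).
  assert (DPi := Pi_deriv bm gm b Pi x p q u1 u2 T HPi Hx Z P0 Q0 HT PT QT Hy Hq U U10 U20).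
  destruct (sign_core bm gm p q u1 u2 x T Z P0 (proj1 Hx) Q0 HT QT ltac:(rewrite PT; exact Hy) U U10 U20 Hgm Hbm)
    as [Nx Rel].
  rewrite PT in Rel.
  assert (Xx : 0 < Xsl B ap dp x) by (apply (HX x); lra).
  assert (Xy : 0 < Xsl B ap dp (Pi x)) by (apply (HX x); lra).
  assert (DI := I_deriv B ap dp Pi x _ ltac:(lra) Xx Xy ltac:(lra) DPi).
  eexists; split; [exact DI|].
  set (y := Pi x) in *.
  set (Nxv := bm * x * x - gm * x + 1) in *.
  set (Ny := bm * y * y - gm * y + 1) in *.
  exists (x * (x - y) / ((1 + dp) * Xsl B ap dp x * Xsl B ap dp y * Nxv)).
  split.
  { destruct Hx as [Hx0 Hxb].
    assert (P1 : 0 < x * (x - y)) by (apply Rmult_lt_0_compat; lra).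
    assert (P2 : 0 < (1 + dp) * Xsl B ap dp x) by (apply Rmult_lt_0_compat; lra).
    assert (P3 : 0 < (1 + dp) * Xsl B ap dp x * Xsl B ap dp y) by (apply Rmult_lt_0_compat; lra).
    assert (P4 : 0 < (1 + dp) * Xsl B ap dp x * Xsl B ap dp y * Nxv) by (apply Rmult_lt_0_compat; lra).
    apply Rdiv_lt_0_compat; assumption. }
  assert (E1 : u1 T = (x * Ny / Nxv + u2 T) / y).
  { apply Rmult_eq_reg_r with (y * Nxv); [|apply Rmult_integral_contrapositive; split; lra].
    replace ((x * Ny / Nxv + u2 T) / y * (y * Nxv)) with (x * Ny + u2 T * Nxv) by (field; lra).
    lra. }
  assert (NX : 0 < B - dp + ap * x).
  { unfold Xsl in Xx. apply Rmult_lt_compat_r with (r := 1 + dp) in Xx; [|lra].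
    replace ((B - dp + ap * x) / (1 + dp) * (1 + dp)) with (B - dp + ap * x) in Xx by (field; lra). lra. }
  assert (NY : 0 < B - dp + ap * y).
  { unfold Xsl in Xy. apply Rmult_lt_compat_r with (r := 1 + dp) in Xy; [|lra].
    replace ((B - dp + ap * y) / (1 + dp) * (1 + dp)) with (B - dp + ap * y) in Xy by (field; lra). lra. }
  rewrite E1. unfold Delta_bar, Xsl, Ny, Nxv.
  match goal with |- ?a = ?b => change (@eq R a b) end.
  unfold Nxv in Nx.
  field. repeat split; lra.
Qed.

Lemma delta_sign (B ap dp bm gm : R) (Pi : R -> R) x :
  0 < 1 + dp -> 0 < Xsl B ap dp x -> bm <> 0 ->
  ((forall y, Delta_bar B ap dp bm gm x y = 0 -> y > Pi x) -> bm * Delta_bar B ap dp bm gm x (Pi x) < 0) /\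
  ((forall y, Delta_bar B ap dp bm gm x y = 0 -> y < Pi x) -> bm * Delta_bar B ap dp bm gm x (Pi x) > 0).
Proof.
  intros Hd Xx Hbm.
  assert (NX : 0 < B - dp + ap * x).
  { unfold Xsl in Xx. apply Rmult_lt_compat_r with (r := 1 + dp) in Xx; [|lra].
    replace ((B - dp + ap * x) / (1 + dp) * (1 + dp)) with (B - dp + ap * x) in Xx by (field; lra). lra. }
  set (k := bm * (B - dp + ap * x)).
  assert (Hk : k <> 0) by (unfold k; apply Rmult_integral_contrapositive; split; lra).
  set (y0 := - (bm * (B - dp) * x - ap - gm * (B - dp)) / k).
  assert (D0 : Delta_bar B ap dp bm gm x y0 = 0) by (unfold Delta_bar, y0, k; field; first [exact Hk | split; lra | lra]).
  assert (DE : Delta_bar B ap dp bm gm x (Pi x) = k * (Pi x - y0)) by (unfold Delta_bar, y0, k; field; first [exact Hk | split; lra | lra]).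
  assert (Hbk : bm * k > 0).
  { unfold k. assert (0 < bm * bm) by (destruct (Rlt_or_le 0 bm); nra). nra. }
  split; intros H; specialize (H y0 D0); rewrite DE;
  replace (bm * (k * (Pi x - y0))) with ((bm * k) * (Pi x - y0)) by ring; nra.
Qed.

Theorem lemma3p2 (B ap dp bm gm b : R) (Pi : R -> R) (J : R -> Prop) :
  B > dp -> dp > 0 ->
  (* Pi is the Poincare half-map of Z^- on [0,b[ *)
  Pi 0 = 0 ->
  (forall x, 0 < x < b -> half_map bm gm x (Pi x)) ->
  (* X^sl > 0 on [Pi x, x] for all x in [0,b[ *)
  (forall x, 0 <= x < b -> forall u, Pi x <= u <= x -> 0 < Xsl B ap dp u) ->
  bm <> 0 -> gm > 0 ->
  is_interval J -> (forall x, J x -> 0 < x < b) ->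
  (bm < 0 ->
     (curve_above B ap dp bm gm Pi J ->
        forall x, J x ->
          Delta_bar B ap dp bm gm x (Pi x) > 0 /\
          exists d, is_derive (I_tilde B ap dp Pi) x d /\ d > 0) /\
     (curve_below B ap dp bm gm Pi J ->
        forall x, J x ->
          Delta_bar B ap dp bm gm x (Pi x) < 0 /\
          exists d, is_derive (I_tilde B ap dp Pi) x d /\ d < 0)) /\
  (bm > 0 ->
     (curve_above B ap dp bm gm Pi J ->
        forall x, J x ->
          Delta_bar B ap dp bm gm x (Pi x) < 0 /\
          exists d, is_derive (I_tilde B ap dp Pi) x d /\ d < 0) /\
     (curve_below B ap dp bm gm Pi J ->
        forall x, J x ->
          Delta_bar B ap dp bm gm x (Pi x) > 0 /\
          exists d, is_derive (I_tilde B ap dp Pi) x d /\ d > 0)).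
Proof.
  intros HB Hdp HP0 HPi HX Hbm Hgm HJ HJb.
  assert (Key : forall x, J x ->
    (exists d, is_derive (I_tilde B ap dp Pi) x d /\
      exists k, 0 < k /\ d = k * Delta_bar B ap dp bm gm x (Pi x)) /\
    (curve_above B ap dp bm gm Pi J -> bm * Delta_bar B ap dp bm gm x (Pi x) < 0) /\
    (curve_below B ap dp bm gm Pi J -> bm * Delta_bar B ap dp bm gm x (Pi x) > 0)).
  { intros x Jx. pose proof (HJb x Jx) as Hx.
    split. apply core with (b := b); auto.
    destruct (HPi x Hx) as [Hy _].
    assert (Xx : 0 < Xsl B ap dp x) by (apply (HX x); lra).
    destruct (delta_sign B ap dp bm gm Pi x ltac:(lra) Xx Hbm) as [D1 D2].
    split; intros H.
    - apply D1. intros y Hy0. apply (H x Jx y Hy0).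
    - apply D2. intros y Hy0. apply (H x Jx y Hy0). }
  split; intros Hs; split; intros Hc x Jx;
    destruct (Key x Jx) as [[d [Hd [k [Hk Ed]]]] [Ka Kb]];
    (assert (S : Delta_bar B ap dp bm gm x (Pi x) > 0 \/ Delta_bar B ap dp bm gm x (Pi x) < 0) by
      (first [ specialize (Ka Hc) | specialize (Kb Hc) ]; nra));
    first [ specialize (Ka Hc) | specialize (Kb Hc) ];
    (split; [nra | exists d; split; [exact Hd | rewrite Ed; nra]]).
Qed.
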